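(* Let $\varphi$ be an almost identity PC-map of $\mathrm{UT}(n,F)$ and let $k$ be a positive integer with $k\le n-3$. If condition $X_k$ holds for $\varphi$, then condition $Y_k$ holds for $\varphi$.
   Context: $F$ is a field and $n\in\mathbb N\cup\{\infty\}$. $\mathrm{UT}(n,F)$ is the group of upper unitriangular $n\times n$ matrices over $F$ (for $n=\infty$: all $\mathbb N\times\mathbb N$ matrices with $1$ on the diagonal and $0$ below it). Convention: $\infty+m=\infty$ for $m\in\mathbb Z$. $e$ is the identity matrix, $e_{ij}$ the matrix unit, $t_{ij}(\alpha)=e+\alpha e_{ij}$ ($i<j$). $[x,y]=xyx^{-1}y^{-1}$. A PC-map is a bijection $\varphi$ of the group with $\varphi([x,y])=[\varphi(x),\varphi(y)]$ for all $x,y$; it is almost identity if $\varphi(t_{ij}(\alpha))=t_{ij}(\alpha)$ for all $i<j$, $\alpha\in F$. $C$ denotes the center of $\mathrm{UT}(n,F)$ (trivial if $n=\infty$, equal to $\{t_{1n}(\alpha):\alpha\in F\}$ if $n$ is finite). Conditions: $X_k$ ($k\le n-2$): $\varphi(a)_{1i}=a_{1i}$ for all $a\in\mathrm{UT}(n,F)$ and all $i=2,\dots,k$. $Y_k$ ($k\le n-3$): for all $\beta,\alpha_1,\dots,\alpha_{k-1}\in F$, the matrix $y=t_{k+1\,k+2}(\beta)\prod_{i=1}^{k-1}t_{ik}(\alpha_i)$ satisfies $\varphi(y)\in yC$. *)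

(* Defs.v *)
From HB Require Import structures.
From mathcomp Require Import all_boot all_order all_algebra.
Set Implicit Arguments. Unset Strict Implicit. Unset Printing Implicit Defensive.
Import GRing.Theory.
Local Open Scope ring_scope.

(* n in N ∪ {∞}: [Some m] is the finite size m, [None] is ∞.
   Matrices are functions nat -> nat -> F with 1-based indices as in the paper;
   index i is valid iff 1 <= i (<= m when n = Some m). *)
Definition dimN := option nat.

Definition inrng (n : dimN) (i : nat) : bool :=
  (0 < i)%N && (if n is Some m then (i <= m)%N else true).

Definition rmx (F : Type) := nat -> nat -> F.

Definition UT (F : fieldType) (n : dimN) (a : rmx F) : Prop :=
  (forall i, inrng n i -> a i i = 1) /\
  (forall i j, ~~ [&& inrng n i, inrng n j & (i <= j)%N] -> a i j = 0).

Definition idm (F : fieldType) (n : dimN) : rmx F :=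
  fun i j => if [&& inrng n i, inrng n j & i == j] then 1 else 0.
Arguments idm {F} n _ _.

(* matrix product (finite sums since matrices are upper triangular) *)
Definition mxmul (F : fieldType) (n : dimN) (a b : rmx F) : rmx F :=
  fun i j => if [&& inrng n i, inrng n j & (i <= j)%N]
             then \sum_(i <= k < j.+1) a i k * b k j else 0.

(* m-th power of N = a - e, entry (i,j) *)
Fixpoint npow (F : fieldType) (a : rmx F) (m : nat) (i j : nat) : F :=
  match m with
  | 0 => (i == j)%:R
  | m'.+1 => \sum_(i <= k < j.+1) (a i k - (i == k)%:R) * npow a m' k j
  end.

(* inverse of a unitriangular matrix: (e + N)^{-1} = sum_m (-N)^m *)
Definition mxinv (F : fieldType) (n : dimN) (a : rmx F) : rmx F :=
  fun i j => if [&& inrng n i, inrng n j & (i <= j)%N]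
             then \sum_(m < (j - i).+1) (-1) ^+ m * npow a m i j else 0.

Definition comm (F : fieldType) (n : dimN) (x y : rmx F) : rmx F :=
  mxmul n (mxmul n (mxmul n x y) (mxinv n x)) (mxinv n y).

Definition tij (F : fieldType) (n : dimN) (i j : nat) (alpha : F) : rmx F :=
  fun p q => idm n p q + (if (p == i) && (q == j) then alpha else 0).
Arguments tij {F} n i j alpha _ _.

Definition PCmap (F : fieldType) (n : dimN) (phi : rmx F -> rmx F) : Prop :=
  [/\ (forall a, UT n a -> UT n (phi a)),
      (forall a b, UT n a -> UT n b -> phi a = phi b -> a = b),
      (forall b, UT n b -> exists2 a, UT n a & phi a = b) &
      (forall x y, UT n x -> UT n y -> phi (comm n x y) = comm n (phi x) (phi y))].

Definition almost_identity (F : fieldType) (n : dimN) (phi : rmx F -> rmx F) : Prop :=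
  forall (i j : nat) (alpha : F), inrng n i -> inrng n j -> (i < j)%N ->
    phi (tij n i j alpha) = tij n i j alpha.

Definition in_center (F : fieldType) (n : dimN) (c : rmx F) : Prop :=
  UT n c /\ forall x, UT n x -> mxmul n c x = mxmul n x c.

Definition condX (F : fieldType) (n : dimN) (phi : rmx F -> rmx F) (k : nat) : Prop :=
  forall a, UT n a -> forall i, (2 <= i <= k)%N -> phi a 1%N i = a 1%N i.

Definition ymat (F : fieldType) (n : dimN) (k : nat) (beta : F) (alpha : nat -> F) : rmx F :=
  mxmul n (tij n k.+1 k.+2 beta)
    (foldr (fun i acc => mxmul n (tij n i k (alpha i)) acc) (idm n) (iota 1 k.-1)).

Definition condY (F : fieldType) (n : dimN) (phi : rmx F -> rmx F) (k : nat) : Prop :=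
  forall (beta : F) (alpha : nat -> F),
    exists2 c, in_center n c & phi (ymat n k beta alpha) = mxmul n (ymat n k beta alpha) c.

(* Main.v *)
Require Import Defs.
From HB Require Import structures.
From mathcomp Require Import all_boot all_order all_algebra.
From mathcomp Require Import zify ring.
Set Implicit Arguments. Unset Strict Implicit. Unset Printing Implicit Defensive.
Import GRing.Theory.
Local Open Scope ring_scope.

Lemma sum_delta (F : fieldType) (f : nat -> F) (a b q : nat) :
  \sum_(a <= l < b) (if l == q then f l else 0) = if (a <= q < b)%N then f q else 0.
Proof.
elim: b => [|b IH]; first by rewrite big_geq //; case: ifP => //; lia.
case: (leqP a b) => hab.
  rewrite big_nat_recr //= IH.
  case: (eqVneq b q) => [<-|hne].
    by rewrite ltnn andbF hab ltnSn add0r.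
  rewrite addr0; move: hne => /eqP hne; case: ifP => H1; case: ifP => H2 //; exfalso; lia.
rewrite big_geq //; case: ifP => //; lia.
Qed.

Lemma inrng_mid (n : dimN) i j l : inrng n i -> inrng n j -> (i <= l <= j)%N -> inrng n l.
Proof. rewrite /inrng; case: n => [m|] /=; rewrite ?andbT; lia. Qed.

Lemma UT_out (F : fieldType) (n : dimN) (a : rmx F) i j :
  UT n a -> ~~ [&& inrng n i, inrng n j & (i <= j)%N] -> a i j = 0.
Proof. by case=> _ H; apply: H. Qed.

Lemma UT_diag (F : fieldType) (n : dimN) (a : rmx F) i : UT n a -> inrng n i -> a i i = 1.
Proof. by case=> H _; apply: H. Qed.

Lemma idm_in (F : fieldType) (n : dimN) i j : inrng n i -> idm n i j = (i == j)%:R :> F.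
Proof.
rewrite /idm => Hi; rewrite Hi /=; case: eqP => [<-|_]; first by rewrite Hi.
by rewrite andbF.
Qed.

Lemma UT_idm (F : fieldType) (n : dimN) : UT n (idm n : rmx F).
Proof.
split=> [i Hi|i j]; first by rewrite idm_in // eqxx.
rewrite /idm; case: ifP => //; case/and3P => -> -> /eqP -> /=; by rewrite leqnn.
Qed.

Lemma UT_mul (F : fieldType) (n : dimN) (a b : rmx F) : UT n a -> UT n b -> UT n (mxmul n a b).
Proof.
move=> Ha Hb; split=> [i Hi|i j H].
  rewrite /mxmul Hi leqnn /= big_nat1 (UT_diag Ha Hi) (UT_diag Hb Hi) mulr1 //.
by rewrite /mxmul (negbTE H).
Qed.

Lemma exch_tri (F : fieldType) (i j : nat) (f : nat -> nat -> F) :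
  \sum_(i <= l < j.+1) \sum_(i <= s < l.+1) f s l =
  \sum_(i <= s < j.+1) \sum_(s <= l < j.+1) f s l.
Proof.
elim: j => [|j IH].
  case: i => [|i]; last by rewrite !big_geq.
  by rewrite !big_nat1.
case: (leqP i j.+1) => hij; last by rewrite !big_geq.
rewrite big_nat_recr //= IH.
transitivity (\sum_(i <= s < j.+2) (\sum_(s <= l < j.+1) f s l + f s j.+1)).
  rewrite big_split /= [X in _ = X + _]big_nat_recr //= [X in _ = _ + X + _]big_geq //.
  by rewrite addr0.
by apply: eq_big_nat => s /andP [_ hs]; rewrite [RHS]big_nat_recr.
Qed.

From Stdlib Require Import FunctionalExtensionality.

Lemma mxext (F : fieldType) (a b : rmx F) : (forall i j, a i j = b i j) -> a = b.
Proof. move=> H; do 2 apply: functional_extensionality => ?; exact: H. Qed.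

Lemma umulA (F : fieldType) (n : dimN) (a b c : rmx F) :
  mxmul n (mxmul n a b) c = mxmul n a (mxmul n b c).
Proof.
apply: mxext => i j; rewrite /mxmul; case: ifP => // /and3P [Hi Hj Hij].
transitivity (\sum_(i <= l < j.+1) \sum_(i <= s < l.+1) a i s * b s l * c l j).
  apply: eq_big_nat => l /andP [h1 h2].
  rewrite Hi (inrng_mid Hi Hj (l:=l)) ?h1 /=; last lia.
  by rewrite mulr_suml.
rewrite exch_tri; apply: eq_big_nat => s /andP [h1 h2].
rewrite (inrng_mid Hi Hj (l:=s)) ?Hj /=; last lia.
rewrite (_ : (s <= j)%N = true); last lia.
by rewrite mulr_sumr; apply: eq_bigr => l _; rewrite mulrA.
Qed.

Lemma umul1 (F : fieldType) (n : dimN) (a : rmx F) : UT n a -> mxmul n (idm n) a = a.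
Proof.
move=> Ha; apply: mxext => i j; rewrite /mxmul; case: ifP => H; last first.
  by rewrite (UT_out Ha) // H.
case/and3P: H => Hi Hj Hij.
rewrite big_ltn //= idm_in // eqxx mul1r big_nat_cond big1 ?addr0 // => l /andP [/andP [h1 _] _].
by rewrite idm_in //; rewrite (_ : (i == l) = false) ?mul0r //; lia.
Qed.

Lemma umul1r (F : fieldType) (n : dimN) (a : rmx F) : UT n a -> mxmul n a (idm n) = a.
Proof.
move=> Ha; apply: mxext => i j; rewrite /mxmul; case: ifP => H; last first.
  by rewrite (UT_out Ha) // H.
case/and3P: H => Hi Hj Hij.
rewrite big_nat_recr //= idm_in // eqxx mulr1 big_nat_cond big1 ?add0r // => l /andP [/andP [h1 h2] _].
rewrite idm_in; first by rewrite (_ : (l == j) = false) ?mulr0 //; lia.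
apply: (inrng_mid Hi Hj); lia.
Qed.

Lemma UT_t (F : fieldType) (n : dimN) p q (g : F) :
  inrng n p -> inrng n q -> (p < q)%N -> UT n (tij n p q g).
Proof.
move=> Hp Hq Hpq; split=> [i Hi|i j H]; rewrite /tij.
  rewrite idm_in // eqxx; case: eqP => [E|]; last by rewrite addr0.
  by case: eqP => [E'|]; rewrite /= ?addr0 //; subst; rewrite ltnn in Hpq.
rewrite /idm; case: ifP => [/and3P [h1 h2 /eqP e]|_].
  by subst; rewrite h1 leqnn in H.
case: ifP; rewrite ?add0r //; case/andP => /eqP e1 /eqP e2; subst.
by rewrite Hp Hq ltnW in H.
Qed.

Lemma tL (F : fieldType) (n : dimN) p q (g : F) (w : rmx F) i j :
  UT n w -> inrng n p -> inrng n q -> (p < q)%N ->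
  mxmul n (tij n p q g) w i j = w i j + (if i == p then g * w q j else 0).
Proof.
move=> Hw Hp Hq Hpq; rewrite /mxmul; case: ifP => H; last first.
  rewrite (UT_out Hw) ?H // add0r; case: eqP => // e; subst.
  rewrite (UT_out Hw) ?mulr0 //; apply/negP => /and3P [_ h2 h3].
  by rewrite Hp h2 /= (leq_trans (ltnW Hpq) h3) in H.
case/and3P: H => Hi Hj Hij.
rewrite /tij; under eq_bigr do rewrite mulrDl.
rewrite big_split /=.
have -> : \sum_(i <= i0 < j.+1) idm n i i0 * w i0 j = w i j.
  have := umul1 Hw => /(congr1 (fun f => f i j)); rewrite /mxmul Hi Hj Hij /= => <- //.
congr (_ + _).
case: eqP => e; last by rewrite big1 // => l _; rewrite andFb mul0r.
subst; rewrite (eq_bigr (fun l => if l == q then g * w q j else 0)); last first.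
  by move=> l _ /=; case: eqP => [->|]; rewrite ?mul0r.
rewrite (sum_delta (fun _ => g * w q j)); case: ifP => // /negbT HH; have hj : (j < q)%N by move: HH Hpq; lia.
by rewrite (UT_out Hw) ?mulr0 //; apply/negP => /and3P [_ _ h]; move: h hj; lia.
Qed.

Lemma tR (F : fieldType) (n : dimN) p q (g : F) (w : rmx F) i j :
  UT n w -> inrng n p -> inrng n q -> (p < q)%N ->
  mxmul n w (tij n p q g) i j = w i j + (if j == q then g * w i p else 0).
Proof.
move=> Hw Hp Hq Hpq; rewrite /mxmul; case: ifP => H; last first.
  rewrite (UT_out Hw) ?H // add0r; case: eqP => // e; subst.
  rewrite (UT_out Hw) ?mulr0 //; apply/negP => /and3P [h1 _ h3].
  by rewrite Hq h1 /= (leq_trans h3 (ltnW Hpq)) in H.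
case/and3P: H => Hi Hj Hij.
rewrite /tij; under eq_bigr do rewrite mulrDr.
rewrite big_split /=.
have -> : \sum_(i <= i0 < j.+1) w i i0 * idm n i0 j = w i j.
  have := umul1r Hw => /(congr1 (fun f => f i j)); rewrite /mxmul Hi Hj Hij /= => <- //.
congr (_ + _).
case: (eqVneq j q) => e; last by rewrite big1 // => l _; rewrite andbF mulr0.
subst; rewrite (eq_bigr (fun l => if l == p then g * w i p else 0)); last first.
  by move=> l _; rewrite ?eqxx ?andbT; case: eqP => [->|]; rewrite ?mulr0 // mulrC.
rewrite (sum_delta (fun _ => g * w i p)); case: ifP => // /negbT HH.
have hj : (p < i)%N by move: HH Hpq Hij; lia.
by rewrite (UT_out Hw) ?mulr0 //; apply/negP => /and3P [_ _ h]; move: h hj; lia.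
Qed.

Lemma npow0 (F : fieldType) (n : dimN) (a : rmx F) m l j :
  UT n a -> inrng n l -> inrng n j -> (j < l + m)%N -> npow a m l j = 0.
Proof.
move=> Ha; elim: m l => [|m IH] l Hl Hj H /=.
  by rewrite (_ : (l == j) = false) //; lia.
case: (ltnP j l) => hjl; first by rewrite big_geq.
rewrite big_ltn ?ltnS //= (UT_diag Ha Hl) eqxx subrr mul0r add0r.
rewrite big_nat_cond big1 // => s /andP [/andP [h1 h2] _].
rewrite IH ?mulr0 //; last lia.
apply: (inrng_mid Hl Hj); lia.
Qed.

Lemma sum_ext0 (F : fieldType) (M1 M2 : nat) (f : nat -> F) :
  (M1 <= M2)%N -> (forall m, (M1 <= m < M2)%N -> f m = 0) ->
  \sum_(m < M1) f m = \sum_(0 <= m < M2) f m.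
Proof.
move=> hM H; rewrite [RHS](big_cat_nat _ (n:=M1)) //=.
have -> : \sum_(M1 <= m < M2) f m = 0.
  by rewrite big_nat_cond big1 // => m /andP [h _]; apply: H.
by rewrite addr0 big_mkord.
Qed.

Lemma telesc (F : fieldType) (P : nat -> F) M :
  \sum_(0 <= m < M) (-1) ^+ m * (P m.+1 + P m) = P 0%N - (-1) ^+ M * P M.
Proof.
elim: M => [|M IH]; first by rewrite big_geq // expr0 mul1r subrr.
rewrite big_nat_recr //= IH exprS; ring.
Qed.

Lemma mul_inv (F : fieldType) (n : dimN) (a : rmx F) : UT n a -> mxmul n a (mxinv n a) = idm n.
Proof.
move=> Ha; apply: mxext => i j; rewrite /mxmul; case: ifP => H; last first.
  rewrite /idm; case: ifP => // /and3P [h1 h2 /eqP e]; subst.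
  by rewrite h1 leqnn in H.
case/and3P: H => Hi Hj Hij.
pose P m := npow a m i j.
transitivity (\sum_(i <= l < j.+1) a i l * \sum_(0 <= m < (j - i).+1) (-1) ^+ m * npow a m l j).
  apply: eq_big_nat => l /andP [h1 h2].
  have Hl : inrng n l by apply: (inrng_mid Hi Hj); lia.
  rewrite /mxinv Hl Hj (_ : (l <= j)%N = true) /=; last lia.
  congr (_ * _); apply: sum_ext0; first lia.
  by move=> m hm; rewrite (npow0 Ha Hl Hj) ?mulr0 //; lia.
transitivity (\sum_(0 <= m < (j - i).+1) (-1) ^+ m * (P m.+1 + P m)).
  under eq_bigr do rewrite mulr_sumr.
  rewrite exchange_big /=; apply: eq_bigr => m _.
  rewrite /P /=.
  under eq_bigr do rewrite mulrCA.
  rewrite -mulr_sumr; congr (_ * _).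
  transitivity (\sum_(i <= l < j.+1) ((a i l - (i == l)%:R) * npow a m l j + (i == l)%:R * npow a m l j)).
    by apply: eq_bigr => l _; rewrite -mulrDl subrK.
  rewrite big_split /=; congr (_ + _).
  rewrite big_ltn ?ltnS //= eqxx mul1r big_nat_cond big1 ?addr0 // => l /andP [/andP [h1 _] _].
  by rewrite (_ : (i == l) = false) ?mul0r //; lia.
rewrite telesc /P (npow0 (m:=(j-i).+1) Ha Hi Hj) ?mulr0 ?subr0; last lia.
by rewrite /= idm_in.
Qed.

Lemma UT_inv (F : fieldType) (n : dimN) (a : rmx F) : UT n a -> UT n (mxinv n a).
Proof.
move=> Ha; split=> [i Hi|i j H]; rewrite /mxinv; last by rewrite (negbTE H).
by rewrite Hi leqnn subnn /= big_ord1 expr0 mul1r /= eqxx.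
Qed.

Lemma inv_mul (F : fieldType) (n : dimN) (a : rmx F) : UT n a -> mxmul n (mxinv n a) a = idm n.
Proof.
move=> Ha; set b := mxinv n a; set c := mxinv n b.
have Hb : UT n b by apply: UT_inv.
have Hc : UT n c by apply: UT_inv.
have E : mxmul n b a = mxmul n (mxmul n b a) (mxmul n b c).
  by rewrite mul_inv // umul1r //; apply: UT_mul.
rewrite E !umulA -[mxmul n a (mxmul n b c)]umulA mul_inv // umul1 //.
exact: mul_inv.
Qed.

Lemma comm_of (F : fieldType) (n : dimN) (a b c : rmx F) : UT n a -> UT n b -> UT n c ->
  mxmul n a b = mxmul n (mxmul n c b) a -> comm n a b = c.
Proof.
move=> Ha Hb Hc E; rewrite /comm E.
rewrite [mxmul n (mxmul n (mxmul n c b) a) _]umulA mul_inv // umul1r; last by apply: UT_mul.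
by rewrite umulA mul_inv // umul1r.
Qed.

Lemma of_comm (F : fieldType) (n : dimN) (a b c : rmx F) : UT n a -> UT n b ->
  comm n a b = c -> mxmul n a b = mxmul n (mxmul n c b) a.
Proof.
move=> Ha Hb <-; rewrite /comm.
have H1 : UT n (mxmul n (mxmul n a b) (mxinv n a)) by apply: UT_mul; [apply: UT_mul|apply: UT_inv].
rewrite [mxmul n (mxmul n _ (mxinv n b)) b]umulA inv_mul // umul1r //.
by rewrite umulA inv_mul // umul1r //; apply: UT_mul.
Qed.

Lemma natr_b (F : fieldType) (b : bool) : (b%:R : F) = if b then 1 else 0.
Proof. by case: b. Qed.

Lemma inrng_le (n : dimN) k a : inrng n k -> (0 < a)%N -> (a <= k)%N -> inrng n a.
Proof. rewrite /inrng; case: n => [m|] /=; rewrite ?andbT; lia. Qed.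

Lemma Pfold (F : fieldType) (n : dimN) k (al : nat -> F) s : forall a,
  inrng n k -> (0 < a)%N -> (a + s <= k)%N ->
  UT n (foldr (fun i acc => mxmul n (tij n i k (al i)) acc) (idm n) (iota a s)) /\
  forall i j, (foldr (fun i acc => mxmul n (tij n i k (al i)) acc) (idm n) (iota a s)) i j
     = idm n i j + (if (a <= i < a + s)%N && (j == k) then al i else 0).
Proof.
elim: s => [|s IH] a Hk Ha Has /=.
  split; first exact: UT_idm.
  by move=> i j; rewrite (_ : (a <= i < a + 0)%N = false) ?addr0 //; lia.
have [HQ QE] := IH a.+1 Hk isT (ltac:(lia)).
have Hra : inrng n a by apply: (inrng_le Hk); lia.
split; first by apply: UT_mul => //; apply: UT_t => //; lia.
move=> i j; rewrite tL //; last lia.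
rewrite QE QE (@idm_in F n k j Hk) (_ : (a.+1 <= k < a.+1 + s)%N = false) /=; last lia.
rewrite !natr_b; case: (eqVneq i a) => [->|hia].
  rewrite ltnn /= !addr0 leqnn /= (_ : (a < a + s.+1)%N = true) /=; last lia.
  by rewrite [k == j]eq_sym; case: eqP; rewrite ?mulr1 ?mulr0.
rewrite addr0; congr (_ + _); rewrite (_ : (a <= i < a + s.+1)%N = (a.+1 <= i < a.+1 + s)%N) //.
move: hia => /eqP hia; apply/idP/idP => /andP [h1 h2]; apply/andP; split; lia.
Qed.

Lemma y_spec (F : fieldType) (n : dimN) k (be : F) (al : nat -> F) :
  (0 < k)%N -> (if n is Some m then (k + 3 <= m)%N else true) ->
  UT n (ymat n k be al) /\ forall i j, ymat n k be al i j =
    idm n i j + (if i == k.+1 then be * idm n k.+2 j else 0)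
              + (if (1 <= i < k)%N && (j == k) then al i else 0).
Proof.
move=> Hk Hn.
have Hr : forall i, (0 < i)%N -> (i <= k + 3)%N -> inrng n i.
  by move=> i; rewrite /inrng; case: n Hn => [m|] /=; rewrite ?andbT; lia.
have [HP PE] := @Pfold F n k al k.-1 1 (Hr k Hk (ltac:(lia))) (isT : (0 < 1)%N) (ltac:(lia)).
split; first by apply: UT_mul => //; apply: UT_t; try apply: Hr; lia.
move=> i j; rewrite /ymat tL //; try (apply: Hr; lia); try lia.
rewrite PE PE (_ : (1 <= k.+2 < 1 + k.-1)%N = false) /=; last lia.
rewrite (_ : (1 + k.-1)%N = k); last lia.
by rewrite addr0 -!addrA [X in _ + X = _]addrC.
Qed.

Lemma ucol1 (F : fieldType) (n : dimN) (w : rmx F) a :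
  UT n w -> inrng n 1%N -> w a 1%N = (a == 1%N)%:R.
Proof.
move=> Hw H1; case: (eqVneq a 1%N) => [->|ha]; first by rewrite (UT_diag Hw H1).
rewrite (UT_out Hw) //; apply/negP => /and3P [h1 _ h3].
by move: h1 h3 ha; rewrite /inrng => /andP [h1 _] h3 /eqP; lia.
Qed.

Lemma rel1 (F : fieldType) (n : dimN) (w : rmx F) i m (d : F) :
  UT n w -> inrng n i -> inrng n m -> (1 < i)%N -> (1 < m)%N ->
  (mxmul n (tij n 1%N i 1) w = mxmul n (mxmul n (tij n 1%N m d) w) (tij n 1%N i 1)) <->
  (forall b, w i b = (i == b)%:R + d * w m b).
Proof.
move=> Hw Hi Hm hi hm.
have H1 : inrng n 1%N by apply: (inrng_le Hi); lia.
have Hti : UT n (tij n 1%N i (1 : F)) by apply: UT_t.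
have L : forall a b, mxmul n (tij n 1%N i 1) w a b = w a b + (if a == 1%N then w i b else 0).
  by move=> a b; rewrite tL // mul1r.
have R : forall a b, mxmul n (mxmul n (tij n 1%N m d) w) (tij n 1%N i 1) a b =
   w a b + (if b == i then (a == 1%N)%:R else 0) + (if a == 1%N then d * w m b else 0).
  move=> a b; rewrite umulA tL //; last by apply: UT_mul.
  rewrite !tR // !(ucol1 _ Hw H1) mul1r (_ : (m == 1%N) = false); try lia.
  by case: (b == i); rewrite ?mulr0 ?addr0.
split=> [E b | E].
  have := congr1 (fun f => f 1%N b) E; rewrite /= L R eqxx => H.
  rewrite -addrA in H; have {}H := addrI _ H.
  by rewrite H [i == b]eq_sym; case: (b == i).
apply: mxext => a b; rewrite L R.
case: (eqVneq a 1%N) => [->|ha]; last by case: (b == i); rewrite /= !addr0.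
rewrite E [i == b]eq_sym; case: (b == i); rewrite /= ?addr0 ?add0r; ring.
Qed.

Lemma rel2L (F : fieldType) (n : dimN) (w : rmx F) j p (g : F) :
  UT n w -> inrng n j.+1 -> inrng n p -> (1 < j)%N -> (1 < p)%N -> (p < j.+1)%N ->
  mxmul n w (tij n j j.+1 1) = mxmul n (mxmul n (tij n p j.+1 g) (tij n j j.+1 1)) w ->
  w 1%N j = 0.
Proof.
move=> Hw Hq Hp hj hp hpq E.
have Hj : inrng n j by apply: (inrng_le Hq); lia.
have := congr1 (fun f => f 1%N j.+1) E; rewrite /= tR // ?eqxx ?mul1r; try lia.
rewrite umulA tL //; last by apply: UT_mul => //; apply: UT_t => //; lia.
rewrite (_ : (1 == p)%N = false); try lia.
rewrite tL //; try lia.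
rewrite (_ : (1 == j)%N = false); try lia.
rewrite !addr0 => H; apply: (@addrI _ (w 1%N j.+1)); by rewrite addr0.
Qed.

Lemma rel2R (F : fieldType) (n : dimN) (w : rmx F) j p (g : F) :
  UT n w -> inrng n j.+1 -> inrng n p -> (1 < j)%N -> (1 < p)%N -> (p < j.+1)%N ->
  (forall b, w j.+1 b = (j.+1 == b)%:R) ->
  (forall a, w a j = (a == j)%:R + (if a == p then g else 0)) ->
  mxmul n w (tij n j j.+1 1) = mxmul n (mxmul n (tij n p j.+1 g) (tij n j j.+1 1)) w.
Proof.
move=> Hw Hq Hp hj hp hpq Er Ec.
have Hj : inrng n j by apply: (inrng_le Hq); lia.
apply: mxext => a b.
rewrite tR //; try lia.
rewrite umulA tL //; last by apply: UT_mul => //; apply: UT_t => //; lia.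
rewrite !tL //; try lia.
rewrite (_ : (j.+1 == j) = false) ?addr0; try lia.
rewrite Ec !Er !mul1r [j.+1 == b]eq_sym.
case: (b == j.+1); case: (a == j); case: (a == p); rewrite /= ?mulr0 ?mulr1 ?addr0 ?add0r //; ring.
Qed.

Lemma idm_in2 (F : fieldType) (n : dimN) i j : inrng n j -> idm n i j = (i == j)%:R :> F.
Proof.
rewrite /idm => Hj; case: eqP => [->|_]; by rewrite ?Hj ?andbF.
Qed.

Lemma rowlast (F : fieldType) m (x : rmx F) b :
  UT (Some m) x -> (0 < m)%N -> x m b = (m == b)%:R.
Proof.
move=> Hx hm; case: (eqVneq m b) => [<-|hb].
  by rewrite (UT_diag Hx) //= /inrng hm leqnn.
rewrite (UT_out Hx) //; apply/negP => /and3P [_ h2 h3].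
by move: h2 h3 hb; rewrite /inrng => /andP [_ h2] h3 /eqP; lia.
Qed.

Lemma finalc (F : fieldType) (n : dimN) (y z : rmx F) :
  UT n y -> UT n z -> (if n is Some m then (1 < m)%N else true) ->
  (forall a b, ~~ ((a == 1%N) && (if n is Some m then b == m else false)) -> z a b = y a b) ->
  exists2 c, in_center n c & z = mxmul n y c.
Proof.
case: n => [m|] Hy Hz hm H; last first.
  exists (idm None).
    by split; [exact: UT_idm | move=> x Hx; rewrite umul1 // umul1r].
  by rewrite umul1r //; apply: mxext => a b; rewrite H // andbF.
have H1 : inrng (Some m) 1%N by rewrite /inrng /=; lia.
have Hm : inrng (Some m) m by rewrite /inrng /=; lia.
exists (tij (Some m) 1%N m (z 1%N m - y 1%N m)).
  split; first by apply: UT_t.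
  move=> x Hx; apply: mxext => a b; rewrite tL // tR // (@rowlast F m x b Hx) ?(@ucol1 F (Some m) x a Hx H1); try lia.
  by rewrite [m == b]eq_sym; case: (a == 1%N); case: (b == m); rewrite /= ?mulr0 ?mulr1.
apply: mxext => a b; rewrite tR // (@ucol1 F (Some m) y a Hy H1).
case: (eqVneq a 1%N) => [->|ha]; case: (eqVneq b m) => [->|hb]; rewrite /= ?mulr1.
- by rewrite addrC subrK.
- by rewrite addr0 H //= eqxx (negbTE hb).
- by rewrite mulr0 addr0 H //= (negbTE ha).
- by rewrite addr0 H //= (negbTE ha).
Qed.

Lemma inrng_S (n : dimN) b : inrng n b -> ~~ (if n is Some m then b == m else false) -> inrng n b.+1.
Proof. rewrite /inrng; case: n => [m|] /=; rewrite ?andbT; lia. Qed.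

Ltac crunch := rewrite ?natr_b /=; repeat (case: ifP => ?); try done; try (exfalso; lia); try ring.

Theorem mainTheorem2 (F : fieldType) (n : dimN) (phi : rmx F -> rmx F) (k : nat) :
  PCmap n phi -> almost_identity n phi ->
  (0 < k)%N -> (if n is Some m then (k + 3 <= m)%N else true) ->
  condX n phi k -> condY n phi k.
Proof.
move=> [HUT _ _ Hcomm] Hai Hk Hn HX be al.
have Hr : forall i, (0 < i)%N -> (i <= k + 3)%N -> inrng n i.
  by move=> i; rewrite /inrng; case: n Hn {HUT Hcomm Hai HX} => [m|] /=; rewrite ?andbT; lia.
have [Hy yE] := y_spec be al Hk Hn.
have Hz := HUT _ Hy.
apply: finalc => //; first by case: n Hn {HUT Hcomm Hai HX Hr Hy yE Hz}; lia.
case: (eqVneq k 1%N) => [k1|k2].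
  have -> : ymat n k be al = tij n 2 3 be.
    rewrite /ymat k1 /= umul1r //; apply: UT_t; try apply: Hr; lia.
  by move=> a b _; rewrite Hai //; apply: Hr; lia.
have hk2 : (1 < k)%N by move: k2 => /eqP; lia.
pose mi i := if (i < k)%N then k else k.+2.
pose dl i := if (i < k)%N then al i else if i == k.+1 then be else 0.
set y := ymat n k be al in Hy yE Hz *.
set z := phi y in Hz *.
have H1 : inrng n 1%N by apply: Hr; lia.
have I2 : forall b, idm n k.+2 b = (k.+2 == b)%:R :> F.
  by move=> b; apply: idm_in; apply: Hr; lia.
have Ik : forall b, idm n k b = (k == b)%:R :> F.
  by move=> b; apply: idm_in; apply: Hr; lia.
have Ry : forall i, (1 < i)%N -> inrng n i -> forall b, y i b = (i == b)%:R + dl i * y (mi i) b.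
  move=> i hi Hi b; rewrite /dl /mi; case: (ltnP i k) => hik;
    rewrite !yE (@idm_in F n i b Hi) ?I2 ?Ik; crunch.
have Rz : forall i, (1 < i)%N -> inrng n i -> forall b, z i b = (i == b)%:R + dl i * z (mi i) b.
  move=> i hi Hi.
  have Hm : inrng n (mi i) by rewrite /mi; case: ifP => _; apply: Hr; lia.
  have hm : (1 < mi i)%N by rewrite /mi; case: ifP => _; lia.
  apply/(rel1 _ Hz Hi Hm hi hm).
  have Ht : UT n (tij n 1%N i (1:F)) by apply: UT_t.
  have Hw : UT n (tij n 1%N (mi i) (dl i)) by apply: UT_t.
  apply: of_comm => //.
  have E1 : comm n (tij n 1%N i 1) y = tij n 1%N (mi i) (dl i).
    by apply: comm_of => //; apply/(rel1 _ Hy Hi Hm hi hm); exact: Ry.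
  transitivity (phi (comm n (tij n 1%N i 1) y)); first by rewrite Hcomm // Hai.
  by rewrite E1 Hai.
have Row1 : forall j, (k < j)%N -> inrng n j.+1 -> z 1%N j = 0.
  move=> j hj Hj1.
  pose g := if j == k.+2 then be else 0.
  have Hp : inrng n k.+1 by apply: Hr; lia.
  have Hj : inrng n j by apply: (inrng_le Hj1); lia.
  have Ht : UT n (tij n j j.+1 (1:F)) by apply: UT_t.
  have Hc : UT n (tij n k.+1 j.+1 g) by apply: UT_t => //; lia.
  apply: (@rel2L F n z j k.+1 g Hz Hj1 Hp) => //; try lia.
  apply: of_comm => //.
  transitivity (phi (comm n y (tij n j j.+1 1))); first by rewrite Hcomm // Hai.
  rewrite (@comm_of F n y (tij n j j.+1 1) (tij n k.+1 j.+1 g)) //; last first.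
    apply: rel2R => //; try lia.
      by move=> b; rewrite yE (@idm_in F n j.+1 b Hj1) ?I2; crunch.
    by move=> a; rewrite yE (@idm_in2 F n a j Hj) ?I2 /g; crunch.
  by rewrite Hai //; lia.
move=> a b Hex.
case Ha: (inrng n a); last by rewrite (UT_out Hz) ?(UT_out Hy) // Ha.
case: (ltnP 1 a) => ha.
  have Hm : inrng n (mi a) by rewrite /mi; case: ifP => _; apply: Hr; lia.
  have hm : (1 < mi a)%N by rewrite /mi; case: ifP => _; lia.
  have D0 : dl (mi a) = 0 by rewrite /dl /mi; case: (ltnP a k) => _; crunch.
  rewrite (Rz a) // (Ry a) // (Rz (mi a)) // (Ry (mi a)) // D0 !mul0r !addr0 //.
have a1 : a = 1%N by move: Ha; rewrite /inrng => /andP [h _]; lia.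
subst a; rewrite eqxx /= in Hex.
case Hb: (inrng n b); last by rewrite (UT_out Hz) ?(UT_out Hy) // Hb andbF.
case: (ltnP k b) => hkb.
  have Hb1 : inrng n b.+1 by apply: inrng_S.
  rewrite Row1 // yE (@idm_in F n 1%N b H1); crunch.
case: (ltnP 1 b) => hb.
  by rewrite /z HX //; lia.
have b1 : b = 1%N by move: Hb; rewrite /inrng => /andP [h _]; lia.
by subst b; rewrite (UT_diag Hz H1) (UT_diag Hy H1).
Qed.
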